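(* Let $A$ be a finite abelian $p$-group, $f\colon\mathbb{Z}_p^h\to A$ a continuous homomorphism, and $q\colon A\to A/\operatorname{im}(f)$ the quotient map. Then (1) $\mathcal{F}_f=q^*\mathcal{F}_{A/\operatorname{im}(f)}$; and (2) if $\operatorname{im}(f)\subseteq pA$, then $\mathcal{F}_f=\mathcal{F}_A$.
   Context: For a finite abelian group $B$, $\mathcal{F}_B$ denotes the family of all proper subgroups of $B$. $\mathcal{F}_f$ is the minimal family of subgroups of $A$ (closed under taking subgroups) containing every proper subgroup $H\subsetneq A$ through which $f$ factors. For a homomorphism $q\colon A\to A'$ and a family $\mathcal{F}$ of subgroups of $A'$, $q^*\mathcal{F}$ is the minimal family of proper subgroups of $A$ containing $\{q^{-1}(H)\mid H\in\mathcal{F}\}$. *)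

(* Defs.v *)
From mathcomp Require Import all_boot all_fingroup all_solvable.
From mathcomp Require Import boolp.
Set Implicit Arguments. Unset Strict Implicit. Unset Printing Implicit Defensive.

Local Open Scope group_scope.

(* x = (x_n)_n with x_n = x_{n+1} mod p^n  (so x_n is the residue in Z/p^n). *)
Definition padic_prop (p : nat) (x : nat -> nat) := forall n, x n = x n.+1 %% p ^ n.

Record padic (p : nat) := Padic { pval :> nat -> nat; pvalP : padic_prop p pval }.

Lemma padd_proof (p : nat) (x y : padic p) :
  padic_prop p (fun n => (x n + y n) %% p ^ n).
Proof.
rewrite /padic_prop => n /=.
have d : p ^ n %| p ^ n.+1 by rewrite expnS dvdn_mull.
rewrite (modn_dvdm _ d) (pvalP x n) (pvalP y n).
by rewrite modnDm.
Qed.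

Definition padd (p : nat) (x y : padic p) : padic p := Padic (padd_proof x y).

Definition Zph (p h : nat) := 'I_h -> padic p.
Definition Zph_add (p h : nat) (x y : Zph p h) : Zph p h := fun i => padd (x i) (y i).

Definition is_Zph_hom (p h : nat) (gT : finGroupType) (f : Zph p h -> gT) :=
  forall x y, f (Zph_add x y) = f x * f y.

(* Continuity for the p-adic product topology on Z_p^h and the discrete topology on gT:
   every point x has a basic neighbourhood x + p^n Z_p^h on which f is constant. *)
Definition Zph_continuous (p h : nat) (gT : finGroupType) (f : Zph p h -> gT) :=
  forall x : Zph p h, exists n : nat,
    forall y : Zph p h, (forall i, y i n = x i n) -> f y = f x.

Definition imf (p h : nat) (gT : finGroupType) (f : Zph p h -> gT) : {set gT} :=
  [set g | `[< exists x, f x = g >] ].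

Definition fam_proper (gT : finGroupType) (B : {set gT}) (K : {group gT}) : Prop :=
  K \proper B.

(* F_f : minimal subgroup-closed family containing the proper H < A through which f factors *)
Definition fam_f (p h : nat) (gT : finGroupType) (A : {group gT}) (f : Zph p h -> gT)
  (K : {group gT}) : Prop :=
  exists H : {group gT}, [/\ H \proper A, (forall x, f x \in H) & K \subset H].

(* q^* F for q : A -> A / N the quotient map and F a family of subgroups of A / N:
   minimal subgroup-closed family of proper subgroups of A containing q^{-1}(H), H in F. *)
Definition fam_pullback (gT : finGroupType) (A N : {set gT})
  (F : {group coset_of N} -> Prop) (K : {group gT}) : Prop :=
  exists H : {group coset_of N},
    [/\ F H, A :&: coset N @*^-1 H \proper A & K \subset A :&: coset N @*^-1 H].

Definition pmul_set (gT : finGroupType) (p : nat) (A : {set gT}) : {set gT} :=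
  [set a ^+ p | a in A].

(* Main.v *)
Require Import Defs.
From mathcomp Require Import all_boot all_fingroup all_solvable.
From mathcomp Require Import boolp.

Local Open Scope group_scope.

Lemma imfP (p h : nat) (gT : finGroupType) (f : Zph p h -> gT) g :
  reflect (exists x, f x = g) (g \in imf f).
Proof. by rewrite inE; apply: asboolP. Qed.

Lemma imf_group_set (p h : nat) (gT : finGroupType) (f : Zph p h -> gT) :
  is_Zph_hom f -> group_set (imf f).
Proof.
move=> hom.
have zP : padic_prop p (fun _ => 0) by move=> n; rewrite mod0n.
pose z : Zph p h := fun _ => Padic zP.
have pw : forall n, f z ^+ n.+1 \in imf f.
  elim=> [|n IH]; first by rewrite expg1; apply/imfP; exists z.
  case/imfP: IH => y Hy.
  by rewrite expgS -Hy -hom; apply/imfP; eexists.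
apply/andP; split.
  have := order_gt0 (f z); case E: #[f z] => [//|n] _.
  by rewrite -(expg_order (f z)) E pw.
apply/subsetP => _ /imset2P [a b /imfP [x <-] /imfP [y <-] ->].
by rewrite -hom; apply/imfP; eexists.
Qed.

Lemma part1 (p h : nat) (gT : finGroupType) (A : {group gT}) (f : Zph p h -> gT)
  (I : {group gT}) :
  abelian A -> (forall x, f x \in A) -> (forall x, f x \in I) ->
  I \subset A -> (forall H : {group gT}, (forall x, f x \in H) -> I \subset H) ->
  forall K : {group gT},
     fam_f A f K <-> fam_pullback A (fam_proper (A / I)) K.
Proof.
move=> cA fA fI sIA Imin K; have nIA : A \subset 'N(I) by apply: sub_abelian_norm.
split.
  case=> H [pHA fH sKH].
  have sIH := Imin H fH.
  have sHA := proper_sub pHA.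
  have nIH : I <| H by rewrite /normal sIH (subset_trans sHA nIA).
  have E : A :&: coset I @*^-1 (H / I) = H.
    by rewrite quotientGK //; apply/setIidPr.
  exists (H / I)%G; split; rewrite ?E //.
  rewrite /fam_proper properE quotientS //= quotientSGK //.
  by move: pHA; rewrite properE => /andP [].
case=> H' [_ pr sK].
exists (A :&: coset I @*^-1 H')%G; split => // x.
rewrite inE fA /=; apply: mem_morphpre; first exact: (subsetP nIA).
by rewrite /= coset_id ?group1.
Qed.

Theorem lemma6p5 (p : nat) (gT : finGroupType) (A : {group gT}) (h : nat)
  (f : Zph p h -> gT) :
  prime p -> abelian A -> p.-group A ->
  (forall x, f x \in A) -> is_Zph_hom f -> Zph_continuous f ->
  (forall K : {group gT},
     fam_f A f K <-> fam_pullback A (fam_proper (A / imf f)) K)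
  /\
  (imf f \subset pmul_set p A ->
     forall K : {group gT}, fam_f A f K <-> fam_proper A K).
Proof.
move=> pr cA pA fA hom _; split.
  pose I := Group (@imf_group_set _ _ _ f hom).
  apply: (@part1 p h gT A f I cA fA).
  - by move=> x; apply/imfP; eexists.
  - by apply/subsetP => _ /imfP [x <-].
  - by move=> H fH; apply/subsetP => _ /imfP [x <-].
move=> sI K; split.
  case=> H [pHA _ sKH]; rewrite /fam_proper.
  exact: sub_proper_trans sKH pHA.
rewrite /fam_proper => pKA.
have [M maxM sKM] := @maxgroup_exists gT (fun M : {group gT} => M \proper A) K pKA.
exists M; split => //; first by case/maxgroupP: maxM.
move=> x.
have : f x \in pmul_set p A by apply: (subsetP sI); apply/imfP; eexists.
case/imsetP => a Aa ->.
apply: (subsetP (Phi_sub_max maxM)).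
rewrite (Phi_Mho pA cA); have -> : a ^+ p = a ^+ (p ^ 1) by rewrite expn1.
apply: Mho_p_elt => //; exact: mem_p_elt pA Aa.
Qed.
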